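(* Let $G\simeq C_2^3$ and let $f$ be an automorphism of $\mathcal{P}_{0}(G)$ with trivial pullback. Then $f$ is the identity.
   Context: For an additively written finite abelian group $G$, $\mathcal{P}_{0}(G)$ is the monoid of all subsets of $G$ containing $0$, with setwise addition and identity $\{0\}$. An automorphism $f$ of $\mathcal{P}_0(G)$ has trivial pullback if $f(\{0,a\})=\{0,a\}$ for all $a\in G$. $C_2$ is the cyclic group of order $2$. *)

(* Defs.v *)
From mathcomp Require Import all_boot all_order all_algebra.
Set Implicit Arguments. Unset Strict Implicit. Unset Printing Implicit Defensive.
Import GRing.Theory.
Local Open Scope ring_scope.

Definition sumset (G : finZmodType) (A B : {set G}) : {set G} :=
  [set a + b | a in A, b in B].

Definition P0 (G : finZmodType) := {A : {set G} | 0 \in A}.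

Lemma sumset0 (G : finZmodType) (A B : P0 G) : (0 : G) \in sumset (sval A) (sval B).
Proof.
apply/imset2P; exists 0 0; [exact: (svalP A) | exact: (svalP B) | by rewrite addr0].
Qed.

Definition P0add (G : finZmodType) (A B : P0 G) : P0 G :=
  exist _ (sumset (sval A) (sval B)) (sumset0 A B).

Definition P0one (G : finZmodType) : P0 G := exist _ [set 0] (set11 0).

Definition P0pair (G : finZmodType) (a : G) : P0 G :=
  exist (fun A : {set G} => 0 \in A) [set 0; a] (setU11 0 [set a]).

Definition is_P0_automorphism (G : finZmodType) (f : P0 G -> P0 G) : Prop :=
  [/\ bijective f,
      forall A B, f (P0add A B) = P0add (f A) (f B)
    & f (P0one G) = P0one G].

Definition trivial_pullback (G : finZmodType) (f : P0 G -> P0 G) : Prop :=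
  forall a : G, f (P0pair a) = P0pair a.

(* Main.v *)
Require Import Defs.
From mathcomp Require Import all_boot all_order all_algebra.
Local Open Scope ring_scope.
From HB Require Import structures.
Import GRing.Theory.

Definition B3 := (bool * bool * bool)%type.
Definition xor3 (p q : B3) : B3 := (p.1.1 (+) q.1.1, p.1.2 (+) q.1.2, p.2 (+) q.2).
Definition z3 : B3 := (false, false, false).
Definition elts : seq B3 := [:: (false,false,false); (false,false,true); (false,true,false); (false,true,true); (true,false,false); (true,false,true); (true,true,false); (true,true,true)].
Lemma mem_elts p : p \in elts. Proof. by case: p => [[[] []] []]. Qed.
Lemma uniq_elts : uniq elts. Proof. by []. Qed.
Definition Mask := seq bool.
Definition idx (p : B3) : nat :=
  ((if p.1.1 then 4 else 0) + (if p.1.2 then 2 else 0) + (if p.2 then 1 else 0))%N.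
Lemma idx_elts p : nth z3 elts (idx p) = p. Proof. by case: p => [[[] []] []]. Qed.
Lemma idx_lt p : (idx p < 8)%N. Proof. by case: p => [[[] []] []]. Qed.
Lemma elts_idx i : (i < 8)%N -> idx (nth z3 elts i) = i.
Proof. by do 8! (case: i => [|i] //). Qed.
Definition inM (m : Mask) (p : B3) := nth false m (idx p).
Definition mk (P : B3 -> bool) : Mask := map P elts.
Lemma inM_mk P p : inM (mk P) p = P p.
Proof. by rewrite /inM /mk (nth_map z3) ?idx_elts // idx_lt. Qed.
Definition sumM (m n : Mask) : Mask :=
  mk (fun p => has (fun q => inM m q && inM n (xor3 p q)) elts).
Definition pairM (a : B3) : Mask := mk (fun p => (p == z3) || (p == a)).
Definition valid (m : Mask) := (size m == 8%N) && inM m z3.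
Lemma mk_inM m : size m = 8%N -> mk (inM m) = m.
Proof.
move=> hs; apply: (@eq_from_nth _ false); first by rewrite size_map hs.
move=> i; rewrite size_map => hi.
by rewrite /mk (nth_map z3) // /inM elts_idx.
Qed.
Fixpoint allL (n : nat) : seq Mask :=
  if n is n'.+1 then [seq b :: l | b <- [:: false; true], l <- allL n'] else [:: [::]].
Lemma allL_mem n m : size m = n -> m \in allL n.
Proof.
elim: n m => [|n IH] [|b l] // hs.
have {}hs : size l = n by case: hs.
have := @allpairs_f _ _ _ (fun b l => b :: l) [:: false; true] (allL n) b l.
by apply; [case: b | exact: IH].
Qed.
Definition allV := [seq m <- allL 8 | valid m].
Definition maskOf (n : nat) : Mask := [seq odd (n %/ 2 ^ i)%N | i <- iota 0 8].

Inductive step := SSum of nat & nat | SUniq of nat & seq nat | SPair of nat & nat & seq nat.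
Definition targets (K : seq Mask) m Ss := [seq (s0, sumM m s0) | s0 <- Ss & sumM m s0 \in K].
Definition condb (K : seq Mask) m T X :=
  all (fun st => sumM X st.1 == st.2) T &&
  all (fun k => (k == m) || (X != k)) K.
Definition cands K m Ss := let T := targets K m Ss in [seq X <- allV | condb K m T X].
Definition cross m1 m2 Ss (pr : Mask * Mask) :=
  all (fun S1 => all (fun S2 => (sumM m1 S1 != sumM m2 S2) || (sumM pr.1 S1 == sumM pr.2 S2)) Ss) Ss.
Fixpoint run (K : seq Mask) (c : seq step) : option (seq Mask) :=
  match c with
  | [::] => Some K
  | SSum i j :: c' => let k1 := maskOf i in let k2 := maskOf j in
     if (k1 \in K) && (k2 \in K) then run (sumM k1 k2 :: K) c' else None
  | SUniq i Ss :: c' => let m := maskOf i in let Ss' := map maskOf Ss in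
     if [&& valid m, all (fun S => S \in K) Ss' & cands K m Ss' == [:: m]]
     then run (m :: K) c' else None
  | SPair i j Ss :: c' => let m1 := maskOf i in let m2 := maskOf j in
     let Ss' := map maskOf Ss in
     if [&& valid m1, valid m2, all (fun S => S \in K) Ss' &
          [seq pr <- [seq (x, y) | x <- cands K m1 Ss', y <- cands K m2 Ss'] | cross m1 m2 Ss' pr]
            == [:: (m1, m2)]]
     then run (m1 :: m2 :: K) c' else None
  end.
Definition K0 := map pairM elts.
Definition cert : seq step := [:: SSum 3 5;
  SSum 3 17;
  SSum 3 65;
  SSum 5 17;
  SSum 5 33;
  SSum 9 17;
  SSum 9 33;
  SPair 13 193 [:: 3; 5; 9; 15; 17; 33; 51; 65; 85; 105; 129; 153; 165; 195];
  SPair 49 193 [:: 3; 5; 9; 15; 17; 33; 51; 65; 85; 105; 129; 153; 165; 195];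
  SPair 11 161 [:: 3; 5; 9; 15; 17; 33; 51; 65; 85; 105; 129; 153; 165; 195];
  SPair 81 161 [:: 3; 5; 9; 15; 17; 33; 51; 65; 85; 105; 129; 153; 165; 195];
  SPair 7 97 [:: 3; 5; 9; 15; 17; 33; 51; 65; 85; 105; 129; 153; 165; 195];
  SPair 145 97 [:: 3; 5; 9; 15; 17; 33; 51; 65; 85; 105; 129; 153; 165; 195];
  SPair 35 137 [:: 3; 5; 9; 15; 17; 33; 51; 65; 85; 105; 129; 153; 165; 195];
  SPair 69 137 [:: 3; 5; 9; 15; 17; 33; 51; 65; 85; 105; 129; 153; 165; 195];
  SPair 19 73 [:: 3; 5; 9; 15; 17; 33; 51; 65; 85; 105; 129; 153; 165; 195];
  SPair 133 73 [:: 3; 5; 9; 15; 17; 33; 51; 65; 85; 105; 129; 153; 165; 195];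
  SPair 131 41 [:: 3; 5; 9; 15; 17; 33; 51; 65; 85; 105; 129; 153; 165; 195];
  SPair 21 41 [:: 3; 5; 9; 15; 17; 33; 51; 65; 85; 105; 129; 153; 165; 195];
  SPair 67 25 [:: 3; 5; 9; 15; 17; 33; 51; 65; 85; 105; 129; 153; 165; 195];
  SPair 37 25 [:: 3; 5; 9; 15; 17; 33; 51; 65; 85; 105; 129; 153; 165; 195];
  SSum 3 85;
  SSum 3 161;
  SSum 3 137;
  SSum 3 41;
  SSum 5 193;
  SSum 5 35;
  SSum 5 19;
  SSum 9 193;
  SSum 9 35;
  SSum 9 19;
  SSum 17 13;
  SSum 17 11;
  SSum 17 7;
  SSum 33 13;
  SSum 33 11;
  SSum 33 7;
  SSum 65 13;
  SSum 65 11;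
  SSum 65 7;
  SSum 129 13;
  SSum 129 11;
  SSum 129 7;
  SSum 13 193;
  SSum 13 35;
  SSum 13 137;
  SSum 13 69;
  SSum 13 19;
  SSum 193 11;
  SSum 193 7;
  SUniq 31 [:: 3; 5; 9; 17; 33; 65; 129];
  SUniq 47 [:: 3; 5; 9; 17; 33; 65; 129];
  SUniq 55 [:: 3; 5; 9; 17; 33; 65; 129];
  SUniq 59 [:: 3; 5; 9; 17; 33; 65; 129];
  SUniq 61 [:: 3; 5; 9; 17; 33; 65; 129];
  SUniq 79 [:: 3; 5; 9; 17; 33; 65; 129];
  SUniq 87 [:: 3; 5; 9; 17; 33; 65; 129];
  SUniq 91 [:: 3; 5; 9; 17; 33; 65; 129];
  SUniq 93 [:: 3; 5; 9; 17; 33; 65; 129];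
  SUniq 103 [:: 3; 5; 9; 17; 33; 65; 129];
  SUniq 107 [:: 3; 5; 9; 17; 33; 65; 129];
  SUniq 109 [:: 3; 5; 9; 17; 33; 65; 129];
  SUniq 115 [:: 3; 5; 9; 17; 33; 65; 129];
  SUniq 117 [:: 3; 5; 9; 17; 33; 65; 129];
  SUniq 121 [:: 3; 5; 9; 17; 33; 65; 129];
  SUniq 143 [:: 3; 5; 9; 17; 33; 65; 129];
  SUniq 151 [:: 3; 5; 9; 17; 33; 65; 129];
  SUniq 155 [:: 3; 5; 9; 17; 33; 65; 129];
  SUniq 157 [:: 3; 5; 9; 17; 33; 65; 129];
  SUniq 167 [:: 3; 5; 9; 17; 33; 65; 129];
  SUniq 171 [:: 3; 5; 9; 17; 33; 65; 129];
  SUniq 173 [:: 3; 5; 9; 17; 33; 65; 129];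
  SUniq 179 [:: 3; 5; 9; 17; 33; 65; 129];
  SUniq 181 [:: 3; 5; 9; 17; 33; 65; 129];
  SUniq 185 [:: 3; 5; 9; 17; 33; 65; 129];
  SUniq 199 [:: 3; 5; 9; 17; 33; 65; 129];
  SUniq 203 [:: 3; 5; 9; 17; 33; 65; 129];
  SUniq 205 [:: 3; 5; 9; 17; 33; 65; 129];
  SUniq 211 [:: 3; 5; 9; 17; 33; 65; 129];
  SUniq 213 [:: 3; 5; 9; 17; 33; 65; 129];
  SUniq 217 [:: 3; 5; 9; 17; 33; 65; 129];
  SUniq 227 [:: 3; 5; 9; 17; 33; 65; 129];
  SUniq 229 [:: 3; 5; 9; 17; 33; 65; 129];
  SUniq 233 [:: 3; 5; 9; 17; 33; 65; 129];
  SUniq 241 [:: 3; 5; 9; 17; 33; 65; 129];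
  SUniq 23 [:: 3; 5; 9; 17; 33; 65; 129];
  SUniq 27 [:: 3; 5; 9; 17; 33; 65; 129];
  SUniq 29 [:: 3; 5; 9; 17; 33; 65; 129];
  SUniq 39 [:: 3; 5; 9; 17; 33; 65; 129];
  SUniq 43 [:: 3; 5; 9; 17; 33; 65; 129];
  SUniq 45 [:: 3; 5; 9; 17; 33; 65; 129];
  SUniq 53 [:: 3; 5; 9; 17; 33; 65; 129];
  SUniq 57 [:: 3; 5; 9; 17; 33; 65; 129];
  SUniq 71 [:: 3; 5; 9; 17; 33; 65; 129];
  SUniq 75 [:: 3; 5; 9; 17; 33; 65; 129];
  SUniq 77 [:: 3; 5; 9; 17; 33; 65; 129];
  SUniq 83 [:: 3; 5; 9; 17; 33; 65; 129];
  SUniq 89 [:: 3; 5; 9; 17; 33; 65; 129];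
  SUniq 99 [:: 3; 5; 9; 17; 33; 65; 129];
  SUniq 101 [:: 3; 5; 9; 17; 33; 65; 129];
  SUniq 113 [:: 3; 5; 9; 17; 33; 65; 129];
  SUniq 135 [:: 3; 5; 9; 17; 33; 65; 129];
  SUniq 139 [:: 3; 5; 9; 17; 33; 65; 129];
  SUniq 141 [:: 3; 5; 9; 17; 33; 65; 129];
  SUniq 147 [:: 3; 5; 9; 17; 33; 65; 129];
  SUniq 149 [:: 3; 5; 9; 17; 33; 65; 129];
  SUniq 163 [:: 3; 5; 9; 17; 33; 65; 129];
  SUniq 169 [:: 3; 5; 9; 17; 33; 65; 129];
  SUniq 177 [:: 3; 5; 9; 17; 33; 65; 129];
  SUniq 197 [:: 3; 5; 9; 17; 33; 65; 129];
  SUniq 201 [:: 3; 5; 9; 17; 33; 65; 129];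
  SUniq 209 [:: 3; 5; 9; 17; 33; 65; 129];
  SUniq 225 [:: 3; 5; 9; 17; 33; 65; 129]].

Definition fullcheck := if run K0 cert is Some Kf then all (fun m => m \in Kf) allV else false.
Lemma fullcheck_ok : fullcheck = true.
Proof. vm_compute. reflexivity. Qed.
Definition goodF (Fm : Mask -> Mask) : Prop :=
  [/\ (forall m n, valid m -> valid n -> Fm (sumM m n) = sumM (Fm m) (Fm n)),
      (forall a, Fm (pairM a) = pairM a),
      (forall m n, valid m -> valid n -> Fm m = Fm n -> m = n)
    & (forall m, valid m -> valid (Fm m))].

Lemma xor3K q r : xor3 (xor3 q r) q = r.
Proof. by case: q r => [[[] []] []] [[[] []] []]. Qed.
Lemma xor3K' q p : xor3 q (xor3 p q) = p.
Proof. by case: q p => [[[] []] []] [[[] []] []]. Qed.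
Lemma xor3zz : xor3 z3 z3 = z3. Proof. by []. Qed.

Lemma size_mk P : size (mk P) = 8%N. Proof. by rewrite size_map. Qed.

Lemma valid_sumM m n : valid m -> valid n -> valid (sumM m n).
Proof.
move=> /andP [_ hm] /andP [_ hn]; rewrite /valid size_mk /= inM_mk.
by apply/hasP; exists z3; rewrite ?mem_elts // hm xor3zz hn.
Qed.

Lemma valid_pairM a : valid (pairM a).
Proof. by rewrite /valid size_mk inM_mk eqxx. Qed.

Lemma allV_mem m : valid m -> m \in allV.
Proof.
move=> hv; rewrite mem_filter hv; apply: allL_mem.
by case/andP: hv => /eqP.
Qed.

Definition Inv Fm (K : seq Mask) := forall k, k \in K -> valid k /\ Fm k = k.

Lemma cands_sound Fm K m Ss : goodF Fm -> Inv Fm K -> valid m ->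
  all (fun S => S \in K) Ss -> Fm m \in cands K m Ss.
Proof.
case=> hD hP hI hV hK hm hS.
rewrite /cands mem_filter allV_mem ?hV // andbT /condb.
apply/andP; split.
  apply/allP => -[S t] /mapP [S' +] [-> ->] /=.
  rewrite mem_filter => /andP [hSK hS'].
  have [vS fS] := hK _ (allP hS _ hS').
  have [vT fT] := hK _ hSK.
  by rewrite -{1}fS -hD // fT.
apply/allP => k kK; have [vk fk] := hK _ kK.
case: eqP => [//|nkm] /=; apply/eqP => e; apply: nkm; apply: hI => //.
by rewrite e fk.
Qed.

Lemma run_sound Fm c : goodF Fm -> forall K K', Inv Fm K -> run K c = Some K' -> Inv Fm K'.
Proof.
move=> hF; have [hD hP hI hV] := hF.
elim: c => [|st c IH] K K' hK /=; first by case=> <-.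
case: st => [i j|i Ss|i j Ss].
- case: ifP => // /andP [h1 h2] /IH; apply => k; rewrite inE => /orP [/eqP ->|]; last exact: hK.
  have [v1 f1] := hK _ h1; have [v2 f2] := hK _ h2.
  by split; [exact: valid_sumM | rewrite hD // f1 f2].
- case: ifP => // /and3P [hm hS /eqP hc] /IH; apply => k; rewrite inE => /orP [/eqP ->|]; last exact: hK.
  split => //.
  have := @cands_sound Fm _ _ _ hF hK hm hS; rewrite hc inE => /eqP //.
- case: ifP => // /and4P [hm1 hm2 hS /eqP hc] /IH; apply => k.
  have hpr : (Fm (maskOf i), Fm (maskOf j)) \in [:: (maskOf i, maskOf j)].
    rewrite -hc mem_filter; apply/andP; split.
      apply/allP => S1 hS1; apply/allP => S2 hS2 /=.
      have [vS1 fS1] := hK _ (allP hS _ hS1).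
      have [vS2 fS2] := hK _ (allP hS _ hS2).
      case: eqP => //= e.
      by rewrite -{1}fS1 -{1}fS2 -!hD // e.
    apply: (@allpairs_f _ _ _ pair); exact: cands_sound.
  rewrite inE in hpr; case/eqP: hpr => e1 e2.
  rewrite !inE => /or3P [/eqP ->|/eqP ->|]; [by [] | by [] | exact: hK].
Qed.

Lemma check_sound Fm c : goodF Fm ->
  (if run K0 c is Some Kf then all (fun m => m \in Kf) allV else false) ->
  forall m, valid m -> Fm m = m.
Proof.
move=> hF + m hm.
case E: (run K0 c) => [Kf|] // /allP hall.
have hK0 : Inv Fm K0.
  move=> k /mapP [a _ ->]; split; [exact: valid_pairM | by case: hF].
have := @run_sound Fm c hF _ _ hK0 E m (hall _ (@allV_mem m hm)).
by case.
Qed.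

Lemma mask_main Fm : goodF Fm -> forall m, valid m -> Fm m = m.
Proof. move=> hF; exact: (@check_sound Fm cert hF fullcheck_ok). Qed.

Definition z2 (b : bool) : 'Z_2 := if b then 1 else 0.
Lemma z2D a b : z2 (a (+) b) = z2 a + z2 b.
Proof. by case: a; case: b; apply/val_inj. Qed.
Lemma z2_inj : injective z2.
Proof. by case; case => // /(congr1 val). Qed.
Lemma z2K (x : 'Z_2) : z2 (x != 0) = x.
Proof. by case: x => [[|[|n]] hn]; apply/val_inj. Qed.

Definition E3 := ('Z_2 * 'Z_2 * 'Z_2)%type.
Definition e3 (p : B3) : E3 := (z2 p.1.1, z2 p.1.2, z2 p.2).
Lemma e3D p q : e3 (xor3 p q) = e3 p + e3 q.
Proof. by rewrite /e3 /= !z2D. Qed.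
Lemma e3_inj : injective e3.
Proof. by move=> [[a b] c] [[a' b'] c'] [/z2_inj -> /z2_inj -> /z2_inj ->]. Qed.
Lemma e3_surj (y : E3) : e3 (y.1.1 != 0, y.1.2 != 0, y.2 != 0) = y.
Proof. by case: y => [[a b] c]; rewrite /e3 /= !z2K. Qed.

Definition code (G : finZmodType) (c : B3 -> G) (A : {set G}) : Mask := mk (fun p => c p \in A).
Definition dec (G : finZmodType) (c : B3 -> G) (m : Mask) : {set G} :=
  [set x | [exists p, (c p == x) && inM m p]].

Arguments code {G}.
Arguments dec {G}.
Lemma c0 (G : finZmodType) (c : B3 -> G) :
  (forall p q, c (xor3 p q) = c p + c q) -> c z3 = 0.
Proof.
move=> cD; have h := cD z3 z3; rewrite xor3zz -[LHS]addr0 in h.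
by apply: esym; apply: (addrI _ h).
Qed.

Lemma code_inj (G : finZmodType) (c : B3 -> G) (cs : forall x, exists p, c p = x) A B :
  code c A = code c B -> A = B.
Proof.
move=> h; apply/setP => x; have [p <-] := cs x.
by have := congr1 (inM^~ p) h; rewrite !inM_mk.
Qed.

Lemma in_dec (G : finZmodType) (c : B3 -> G) (ci : injective c) m p :
  (c p \in dec c m) = inM m p.
Proof.
rewrite inE; apply/existsP/idP => [[q /andP [/eqP /ci -> //]]|h].
by exists p; rewrite eqxx.
Qed.

Lemma code_dec (G : finZmodType) (c : B3 -> G) (ci : injective c) m :
  size m = 8%N -> code c (dec c m) = m.
Proof.
move=> hs; rewrite /code -[RHS]mk_inM //; apply: eq_map => p.
exact: in_dec.
Qed.

Lemma code_sum (G : finZmodType) (c : B3 -> G) (cD : forall p q, c (xor3 p q) = c p + c q)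
  (ci : injective c) (cs : forall x, exists p, c p = x) A B :
  code c (sumset A B) = sumM (code c A) (code c B).
Proof.
rewrite /code /sumM /mk /sumset; apply: eq_map => p.
apply/imset2P/hasP => [[x y hx hy hxy]|[q _ /andP [hq hr]]].
  have [q hq] := cs x; have [r hr] := cs y.
  have hp : p = xor3 q r by apply: ci; rewrite cD hq hr.
  exists q; first exact: mem_elts.
  by rewrite !inM_mk hq hx hp xor3K hr hy.
rewrite !inM_mk in hq hr.
by exists (c q) (c (xor3 p q)) => //; rewrite -cD xor3K'.
Qed.

Lemma code_pair (G : finZmodType) (c : B3 -> G) (cD : forall p q, c (xor3 p q) = c p + c q)
  (ci : injective c) a :
  code c [set 0; c a] = pairM a.
Proof.
rewrite /code /pairM; apply: eq_map => p /=.
by rewrite !inE -(@c0 _ _ cD) !(inj_eq ci).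
Qed.

Arguments c0 {G c}.
Arguments code_inj {G c}.
Arguments in_dec {G c}.
Arguments code_dec {G c}.
Arguments code_sum {G c}.
Arguments code_pair {G c}.

Lemma main_glue (G : finZmodType) (c : B3 -> G) (cD : forall p q, c (xor3 p q) = c p + c q)
  (ci : injective c) (cs : forall x, exists p, c p = x)
  (f : P0 G -> P0 G) (hf : is_P0_automorphism f) (htriv : trivial_pullback f) :
  forall A : P0 G, f A = A.
Proof.
have hc0 := c0 cD.
case: hf => fbij fD _.
have finj := bij_inj fbij.
pose decP (m : Mask) : P0 G := exist _ (0 |: dec c m) (setU11 0 _).
pose Fm (m : Mask) : Mask := code c (sval (f (decP m))).
have decK m : valid m -> 0 |: dec c m = dec c m.
  move=> /andP [_ hm]; apply/setUidPr; rewrite sub1set -hc0 in_dec //.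
have vsz m : valid m -> size m = 8%N by case/andP => /eqP.
have codeP (A : P0 G) : valid (code c (sval A)).
  rewrite /valid size_mk eqxx /= inM_mk hc0; exact: (svalP A).
have decPK (A : P0 G) : decP (code c (sval A)) = A.
  apply: val_inj => /=; rewrite decK; last exact: codeP.
  by apply: (code_inj cs); rewrite code_dec // size_mk.
have valsum m n : valid m -> valid n -> decP (sumM m n) = P0add (decP m) (decP n).
  move=> vm vn; apply: val_inj => /=; rewrite !decK ?valid_sumM //.
  apply: (code_inj cs); rewrite (code_sum cD ci cs) !code_dec ?size_mk //; exact: vsz.
have hF : goodF Fm.
  split.
  - by move=> m n vm vn; rewrite /Fm valsum // fD /= (code_sum cD ci cs).
  - move=> a; rewrite /Fm.
    have -> : decP (pairM a) = P0pair (c a).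
      apply: val_inj => /=; rewrite decK ?valid_pairM //.
      by apply: (code_inj cs); rewrite code_dec ?size_mk // code_pair.
    by rewrite htriv /= code_pair.
  - move=> m n vm vn h.
    have /val_inj/finj : sval (f (decP m)) = sval (f (decP n)) by apply: (code_inj cs).
    move=> /(congr1 val) /=; rewrite !decK // => /(congr1 (code c)).
    by rewrite !code_dec //; exact: vsz.
  - move=> m vm; exact: codeP.
move=> A; have := @mask_main Fm hF _ (codeP A).
by rewrite /Fm decPK => /(code_inj cs) /val_inj.
Qed.

Theorem lemma3p5 (G : finZmodType)
  (isoG : exists phi : G -> 'Z_2 * 'Z_2 * 'Z_2,
            bijective phi /\ {morph phi : x y / x + y})
  (f : P0 G -> P0 G)
  (hf : is_P0_automorphism f) (htriv : trivial_pullback f) :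
  forall A : P0 G, f A = A.
Proof.
case: isoG => phi [[psi phiK psiK] phiD].
apply: (@main_glue G (fun p => psi (e3 p))) => //.
- move=> p q; apply: (can_inj phiK); by rewrite phiD !psiK e3D.
- by move=> p q /(congr1 phi); rewrite !psiK => /e3_inj.
- move=> x; exists (let y := phi x in (y.1.1 != 0, y.1.2 != 0, y.2 != 0)).
  by rewrite /= e3_surj phiK.
Qed.
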